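(* Let $0\le k\le n$ be integers and let $H\le\mathrm{Sym}_n$ be the stabiliser of a $k$-element subset of $\{1,\dots,n\}$, so $H\cong\mathrm{Sym}_k\times\mathrm{Sym}_{n-k}$. Then for every subgroup $G\le\mathrm{Sym}_n$, \[ |Z_{\mathrm{Sym}_n}(G)|\le 2^n|Z_H(G)| . \] In addition, let $u:\mathbb N\to\mathbb R$ be a function such that $u(m)^{-1}|K|^{1/2}\le|K[2]|\le u(m)|K|^{1/2}$ for every $m$ and every $K\le\mathrm{Sym}_m$. Then \[ |Z_{\mathrm{Sym}_n}(G)[2]|\le 2^n u(n)^2\,|Z_H(G)[2]| . \]
   Context: $Z_X(G)$ denotes the centraliser of $G$ in $X$, i.e. the elements of $X$ commuting with every element of $G$. For a group $K$, $K[2]=\{g\in K:g^2=1\}$ (including the identity). A function $u$ as in the hypothesis exists with $\log u(n)=O(n\log\log n)$. *)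

(* Defs.v *)
From HB Require Import structures.
From mathcomp Require Import all_boot all_order all_algebra all_fingroup.
Set Implicit Arguments. Unset Strict Implicit. Unset Printing Implicit Defensive.
Import Order.TTheory GRing.Theory Num.Theory.

(* Sym_n is modelled as the full permutation group of 'I_n = {0,..,n-1}. *)

Definition set_stab (n : nat) (S : {set 'I_n}) : {set {perm 'I_n}} :=
  [set g : {perm 'I_n} | g @: S == S].

(* K[2] = { g in K | g^2 = 1 } (identity included). *)
Definition inv2 (gT : finGroupType) (K : {set gT}) : {set gT} :=
  [set x in K | (x ^+ 2 == 1)%g].

(* Main.v *)
Require Import Defs.
From HB Require Import structures.
From mathcomp Require Import all_boot all_order all_algebra all_fingroup.
From mathcomp Require Import ring lra.
Import Order.TTheory GRing.Theory Num.Theory.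
Local Open Scope ring_scope.

Lemma stab_eq (n : nat) (S : {set 'I_n}) :
  set_stab S = ('C[S | 'P^*])%g.
Proof.
apply/setP=> g; rewrite inE.
apply/eqP/astab1P.
  by move=> hg; rewrite /= setactE.
by move=> hg; rewrite /= setactE in hg.
Qed.

Lemma part1 (n : nat) (S : {set 'I_n}) (G : {group {perm 'I_n}}) :
  (#|('C(G))%g| <= 2 ^ n * #|('C_(set_stab S)(G))%g|)%N.
Proof.
rewrite -(card_orbit_stab ('P^*)%act 'C(G)%G S).
apply: leq_mul.
  have -> : (2 ^ n = #|powerset [set: 'I_n]|)%N by rewrite card_powerset cardsT card_ord.
  apply: subset_leq_card; apply/subsetP=> X _; by rewrite powersetE subsetT.
rewrite stab_eq setIC; apply: subset_leq_card; apply/subsetP=> x; by rewrite !inE.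
Qed.

Theorem lemmaA3 (n k : nat) (S : {set 'I_n}) (hk : (k <= n)%N) (hS : #|S| = k)
    (G : {group {perm 'I_n}}) :
  (#|('C(G))%g| <= 2 ^ n * #|('C_(set_stab S)(G))%g|)%N /\
  (forall (R : rcfType) (u : nat -> R),
     (forall (m : nat) (K : {group {perm 'I_m}}),
        (u m)^-1 * Num.sqrt (#|K|%:R) <= (#|inv2 K|%:R : R) /\
        (#|inv2 K|%:R : R) <= u m * Num.sqrt (#|K|%:R)) ->
     (#|inv2 ('C(G))%g|%:R : R) <= 2%:R ^+ n * u n ^+ 2 * #|inv2 ('C_(set_stab S)(G))%g|%:R).
Proof.
split; first exact: part1.
move=> R u hu.
have gH : group_set ('C_(set_stab S)(G))%g.
  by rewrite stab_eq; apply: groupP.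
set K := Group gH.
have u1 : 1 <= u n.
  have [_ h] := hu n 1%G.
  have e1 : #|inv2 (1%G : {group {perm 'I_n}})| = 1%N.
    suff -> : inv2 (1%G : {group {perm 'I_n}}) = [set 1%g] by rewrite cards1.
    apply/setP=> x; rewrite !inE; case: eqP => // ->; by rewrite expg1n eqxx.
  by move: h; rewrite e1 cards1 sqrtr1 mulr1.
have u0 : 0 < u n by apply: lt_le_trans u1.
have [_ h1] := hu n 'C(G)%G.
have [h2 _] := hu n K.
have hK : #|K| = #|('C_(set_stab S)(G))%g| by [].
have h2' : Num.sqrt (#|K|%:R) <= u n * #|inv2 K|%:R.
  by rewrite -ler_pdivrMl ?invr_gt0 // invrK mulrC.
apply: (le_trans h1).
have hc : Num.sqrt (#|'C(G)%G|%:R : R) <= Num.sqrt (2%:R ^+ n) * Num.sqrt (#|K|%:R).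
  rewrite -sqrtrM ?exprn_ge0 ?ler0n // ler_sqrt ?mulr_ge0 ?exprn_ge0 ?ler0n //.
  by rewrite -natrX -natrM ler_nat hK; exact: part1.
have hs : Num.sqrt (2%:R ^+ n : R) <= 2%:R ^+ n.
  have x1 : (1 : R) <= 2%:R ^+ n by rewrite exprn_ege1 // ler1n.
  set x := (2%:R ^+ n : R) in x1 *.
  have x0 : 0 <= x by apply: le_trans x1.
  rewrite -{2}(ger0_norm x0) -sqrtr_sqr ler_sqrt ?exprn_ge0 // expr2; nra.
have s0 : 0 <= Num.sqrt (#|K|%:R : R) by apply: sqrtr_ge0.
have s1 : 0 <= Num.sqrt (2%:R ^+ n : R) by apply: sqrtr_ge0.
set a := Num.sqrt (#|'C(G)%G|%:R : R) in hc *.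
set b := Num.sqrt (2%:R ^+ n : R) in hc hs s1 *.
set c := Num.sqrt (#|K|%:R : R) in hc h2' s0 *.
set d := (#|inv2 K|%:R : R) in h2' *.
set N := (2%:R ^+ n : R) in hs *.
set U := u n in u0 u1 h2' *.
change (U * a <= N * U ^+ 2 * d).
have ha : U * a <= U * (b * c) by rewrite ler_pM2l.
have hb : U * (b * c) <= U * (N * c) by rewrite ler_pM2l // ler_wpM2r.
have hcc : U * (N * c) <= U * (N * (U * d)).
  by rewrite ler_pM2l // ler_wpM2l // (le_trans s1 hs).
apply: (le_trans ha); apply: (le_trans hb); apply: (le_trans hcc).
by rewrite le_eqVlt; apply/orP; left; apply/eqP; rewrite expr2; ring.
Qed.
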